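(* Let $0<d\le 1$ and $0<\varepsilon<1/12$ be real numbers, and let $G$ be a balanced bipartite graph on $n$ vertices with (bipartite) density $d_G$, where $$n> \exp\!\big(10 \log (1/d)\, \log (1/\varepsilon)/\varepsilon^2\big).$$ Then the edge set of $G$ can be written as an edge-disjoint union $$E(G)=E(H_0)\cup E(H_1)\cup\dots\cup E(H_K),$$ where $H_0,H_1,\dots,H_K$ are balanced bipartite subgraphs of $G$ such that: for every $1\le i\le K$, $H_i$ is an $(\varepsilon, d-\varepsilon)$-super-regular pair with bipartite density at least $d$ and with at least $m$ vertices in each of its two parts, where $$m \ge d^{(10/\varepsilon^2)\log (1/\varepsilon)}\, n/2;$$ $H_0$ has bipartite density less than $d$; and $$K \le 2d_G \cdot d^{-(20/\varepsilon^2)\log (1/\varepsilon)}/d .$$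
   Context: All graphs are simple; $\log$ denotes the natural logarithm. A bipartite graph is balanced if its two parts have equal size. For a bipartite graph with parts $A,B$ (or disjoint vertex sets $A,B$ in a graph), $e(A,B)$ is the number of edges between $A$ and $B$ and the (bipartite) density is $d(A,B)=e(A,B)/(|A|\,|B|)$; for a bipartite graph ''density'' means this bipartite density between its two parts. A bipartite graph $H=(A,B;E)$ is $\varepsilon$-regular if $|d(A,B)-d(X,Y)|\le\varepsilon$ for all $X\subseteq A$, $Y\subseteq B$ with $|X|\ge\varepsilon|A|$, $|Y|\ge\varepsilon|B|$. It is an $(\varepsilon,\delta)$-super-regular pair if it is $\varepsilon$-regular, every vertex of $A$ has at least $\delta|B|$ neighbours in $B$, and every vertex of $B$ has at least $\delta|A|$ neighbours in $A$. *)

(* Defs.v *)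
From HB Require Import structures.
From mathcomp Require Import all_boot all_order all_algebra.
From mathcomp Require Import all_classical all_reals all_analysis.
Set Implicit Arguments. Unset Strict Implicit. Unset Printing Implicit Defensive.
Import Order.TTheory GRing.Theory Num.Theory.
Local Open Scope ring_scope.

(* A bipartite graph with parts inside finite types T (left) and U (right) is
   given by its edge set E : {set T * U}; (x, y) \in E means x ~ y. *)

Definition bdens (R : realType) (T U : finType) (E : {set T * U})
  (X : {set T}) (Y : {set U}) : R :=
  #|E :&: finset.setX X Y|%:R / (#|X| * #|Y|)%:R.

Definition eps_regular (R : realType) (T U : finType) (E : {set T * U})
  (X : {set T}) (Y : {set U}) (eps : R) : Prop :=
  forall (X' : {set T}) (Y' : {set U}), X' \subset X -> Y' \subset Y ->
    eps * #|X|%:R <= #|X'|%:R -> eps * #|Y|%:R <= #|Y'|%:R ->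
    `|bdens R E X Y - bdens R E X' Y'| <= eps.

Definition super_regular (R : realType) (T U : finType) (E : {set T * U})
  (X : {set T}) (Y : {set U}) (eps delta : R) : Prop :=
  [/\ eps_regular E X Y eps,
      (forall x, x \in X -> delta * #|Y|%:R <= #|[set y in Y | (x, y) \in E]|%:R) &
      (forall y, y \in Y -> delta * #|X|%:R <= #|[set x in X | (x, y) \in E]|%:R)].

(* Main.v *)
Require Import Defs.
From HB Require Import structures.
From mathcomp Require Import all_boot all_order all_algebra.
From mathcomp Require Import all_classical all_reals all_analysis.
From mathcomp Require Import zify ring lra.
Import Order.TTheory GRing.Theory Num.Theory.
Set Implicit Arguments. Unset Strict Implicit. Unset Printing Implicit Defensive.

Section Comb.
Variables (T U : finType) (G : {set T * U}).

Definition eE (A : {set T}) (B : {set U}) : nat := #|G :&: finset.setX A B|.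

Lemma eE_le (A : {set T}) (B : {set U}) : (eE A B <= #|A| * #|B|)%N.
Proof. by rewrite /eE -cardsX subset_leq_card // subsetIr. Qed.

Lemma eE_splitl (A A1 : {set T}) (B : {set U}) : A1 \subset A ->
  eE A B = (eE A1 B + eE (A :\: A1) B)%N.
Proof.
move=> sA; rewrite /eE -(cardsID (finset.setX A1 B)); congr (_ + _)%N;
apply: eq_card => -[x y]; rewrite !inE /=; move: (fintype.subsetP sA x);
case: (x \in A1); case: (x \in A); case: (y \in B); case: ((x,y) \in G) => //= /(_ erefl) //; case.
Qed.

Lemma eE_splitr (A : {set T}) (B B1 : {set U}) : B1 \subset B ->
  eE A B = (eE A B1 + eE A (B :\: B1))%N.
Proof.
move=> sB; rewrite /eE -(cardsID (finset.setX A B1)); congr (_ + _)%N;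
apply: eq_card => -[x y]; rewrite !inE /=; move: (fintype.subsetP sB y);
case: (y \in B1); case: (x \in A); case: (y \in B); case: ((x,y) \in G) => //= /(_ erefl) //; case.
Qed.

Lemma eE0l (B : {set U}) : eE finset.set0 B = 0%N.
Proof. by apply/eqP; rewrite -leqn0 (leq_trans (eE_le _ _)) // cards0. Qed.

Lemma eE_sum (A : {set T}) (B : {set U}) : eE A B = (\sum_(x in A) eE (finset.set1 x) B)%N.
Proof.
move: {2}#|A| (erefl #|A|) => n; elim: n A => [|n IH] A hA.
  by move/eqP: hA; rewrite cards_eq0 => /eqP ->; rewrite big_set0 eE0l.
have [x xA] : exists x, x \in A.
  by apply/set0Pn; rewrite -card_gt0 hA.
rewrite (big_setD1 x xA) /= (eE_splitl B (_ : finset.set1 x \subset A)); last by rewrite finset.sub1set.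
congr (_ + _)%N; apply: IH.
by rewrite (cardsD1 x A) xA in hA; case: hA.
Qed.

Lemma eE_deg (x : T) (B : {set U}) : eE (finset.set1 x) B = #|[set y in B | (x, y) \in G]|.
Proof.
rewrite /eE -[in RHS](card_imset _ (fun y1 y2 (h : (x, y1) = (x, y2)) => f_equal snd h)).
apply: eq_card => -[a b]; rewrite !inE.
apply/idP/idP => /=.
  case/and3P => h /eqP ea hb; subst a; apply/imsetP; exists b => //; by rewrite inE hb.
by case/imsetP => y; rewrite inE => /andP [hy hg] [-> ->]; rewrite hg eqxx hy.
Qed.

Lemma exists_lowdeg (A : {set T}) (B : {set U}) : (0 < #|A|)%N ->
  exists2 x, x \in A & (eE (finset.set1 x) B * #|A| <= eE A B)%N.
Proof.
move=> hA; case: (boolP [exists x in A, (eE (finset.set1 x) B * #|A| <= eE A B)%N]).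
  by case/fintype.existsP => x /andP [xA hx]; exists x.
rewrite negb_exists => /fintype.forallP H.
have : (\sum_(x in A) (eE A B).+1 <= \sum_(x in A) eE (finset.set1 x) B * #|A|)%N.
  apply: leq_sum => x xA; move: (H x); rewrite xA /= ltnNge; exact.
rewrite sum_nat_const -big_distrl /= -eE_sum.
lia.
Qed.

Lemma avg_left (k : nat) (A : {set T}) (B : {set U}) : (k <= #|A|)%N ->
  exists A' : {set T}, [/\ A' \subset A, #|A'| = k &
     (eE A B * k <= eE A' B * #|A|)%N].
Proof.
move: {2}(#|A| - k)%N (erefl (#|A| - k)%N) => m.
elim: m A => [|m IH] A hm hk.
  have e : #|A| = k by lia.
  by exists A; split => //; rewrite e.
have hA : (0 < #|A|)%N by lia.
have [x xA hx] := exists_lowdeg B hA.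
have cA : #|A :\ x| = #|A|.-1 by rewrite (cardsD1 x A) xA.
have [A' [sA' cA' he]] : exists A' : {set T}, [/\ A' \subset A :\ x, #|A'| = k &
     (eE (A :\ x) B * k <= eE A' B * #|A :\ x|)%N].
  by apply: IH; rewrite cA; lia.
exists A'; split => //.
  by apply: (fintype.subset_trans sA'); apply: finset.subsetDl.
have sp := eE_splitl B (_ : finset.set1 x \subset A).
rewrite finset.sub1set xA in sp; have {}sp := sp erefl.
rewrite cA in he.
move: he hx; rewrite sp.
set a := #|A|; set e1 := eE (finset.set1 x) B; set e2 := eE (A :\ x) B; set e3 := eE A' B.
move=> he hx.
case: (posnP k) => [-> | kpos]; first by rewrite muln0.
have ha : (0 < a.-1)%N by lia.
have : ((e1 + e2) * k * a.-1 <= e3 * a * a.-1)%N.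
  have h1 : ((e1 + e2) * k * a.-1 = e1 * a.-1 * k + e2 * k * a.-1)%N by ring.
  have h2 : ((e1 * a.-1) <= e2)%N.
    have : (e1 * a <= e1 + e2)%N by [].
    have -> : a = (a.-1).+1 by lia.
    rewrite mulnS; lia.
  have h3 : (e3 * a * a.-1 = e3 * a.-1 * a)%N by ring.
  rewrite h1 h3.
  have : (e2 * k * a <= e3 * a.-1 * a)%N by rewrite leq_mul2r he orbT.
  have : (e1 * a.-1 * k <= e2 * k)%N by rewrite leq_mul2r h2 orbT.
  have -> : a = (a.-1).+1 by lia.
  rewrite !mulnS. nia.
by rewrite leq_mul2r; case/orP => // /eqP h; lia.
Qed.

Definition trG : {set U * T} := [set p | (p.2, p.1) \in G].

End Comb.

Lemma eE_tr (T U : finType) (G : {set T * U}) (A : {set T}) (B : {set U}) :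
  eE (trG G) B A = eE G A B.
Proof.
have inj : injective (fun p : T * U => (p.2, p.1)) by move=> [a b] [c e] [-> ->].
rewrite /eE -[in RHS](card_imset _ inj).
apply: eq_card => -[b a]; rewrite !inE /=.
apply/idP/idP.
  case/and3P => h hb ha; apply/imsetP; exists (a, b) => //; by rewrite !inE h ha hb.
by case/imsetP => -[a' b']; rewrite !inE /= => /and3P [h ha hb] [-> ->]; rewrite h ha hb.
Qed.

Lemma trGK (T U : finType) (G : {set T * U}) : trG (trG G) = G.
Proof. by apply/setP => -[a b]; rewrite !inE. Qed.

Lemma avg_right (T U : finType) (G : {set T * U}) (k : nat) (A : {set T}) (B : {set U}) :
  (k <= #|B|)%N ->
  exists B' : {set U}, [/\ B' \subset B, #|B'| = k &
     (eE G A B * k <= eE G A B' * #|B|)%N].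
Proof.
move=> hk; have [B' [s c h]] := avg_left (trG G) A hk.
by exists B'; split => //; rewrite -!(eE_tr G).
Qed.


Local Open Scope ring_scope.

Section RealLemmas.
Variable R : realType.

Lemma bernoulli_powR (k x : R) : 0 < k -> k < 1 -> 1 <= x -> x `^ k <= 1 + k * (x - 1).
Proof.
move=> k0 k1 x1.
have x0 : 0 <= x by apply: le_trans x1.
have := @conjugate_powR R (x `^ k) 1 (k^-1) ((1 - k)^-1) (powR_ge0 _ _) ler01.
rewrite invr_gt0 k0 invr_gt0 subr_gt0 k1 => /(_ erefl erefl).
have e : k^-1^-1 + (1 - k)^-1^-1 = 1 :> R by rewrite !invrK addrC subrK.
move=> /(_ e).
rewrite -powRrM mulfV ?gt_eqF // powRr1 // powR1 mulr1 !invrK.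
move=> h; apply: (le_trans h); lra.
Qed.

Lemma powR_ratio (k a b : R) : 0 < a -> 0 <= b -> b `^ k = a `^ k * (b / a) `^ k.
Proof.
move=> a0 b0; rewrite -powRM; [|exact: ltW|exact: divr_ge0 b0 (ltW a0)].
by rewrite mulrC divfK // gt_eqF.
Qed.

End RealLemmas.

Definition Ext (R : realType) (T U : finType) (G : {set T * U}) (dl : R) (s : nat) (k : R) :=
  forall (A : {set T}) (B : {set U}), #|A| = #|B| -> (0 < #|A|)%N ->
    (eE G A B)%:R * (#|A|%:R `^ k) <= dl * (s%:R `^ k) * (#|A|%:R ^+ 2).

Lemma Ext_tr (R : realType) (T U : finType) (G : {set T * U}) (dl : R) s k :
  Ext G dl s k -> Ext (trG G) dl s k.
Proof.
move=> h B A e pos; rewrite eE_tr e; apply: h => //; by rewrite -e.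
Qed.

Lemma DB1 (R : realType) (T U : finType) (G : {set T * U}) (dl : R) s k :
  Ext G dl s k -> forall (A : {set T}) (B : {set U}), (0 < #|A|)%N -> (#|A| <= #|B|)%N ->
  (eE G A B)%:R * (#|A|%:R `^ k) <= dl * (s%:R `^ k) * #|A|%:R * #|B|%:R.
Proof.
move=> hE A B a0 ab.
have [B' [sB cB hB]] := avg_right G A ab.
have := hE A B' (esym cB) a0.
move: hB; rewrite -(ler_nat R) !natrM.
set E := (eE G A B)%:R; set E' := (eE G A B')%:R; set P := _ `^ k; set C := dl * _.
set a := #|A|%:R; set b := #|B|%:R.
have P0 : 0 <= P by apply: powR_ge0.
have a0' : 0 < a by rewrite ltr0n.
have b0 : 0 <= b by [].
move=> h1 h2.
have h3 : E * a * P <= E' * b * P by rewrite ler_wpM2r.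
have h4 : E' * P * b <= C * a ^+ 2 * b by rewrite ler_wpM2r.
have : (E * P) * a <= (C * a * b) * a.
  apply: (le_trans _ (le_trans h4 _)); first by rewrite -!mulrA [P * a]mulrC [P * b]mulrC !mulrA (le_trans h3) // -!mulrA [b * P]mulrC.
  by rewrite expr2 !mulrA -[C * a * a * b]mulrA [a * b]mulrC !mulrA.
by rewrite ler_pM2r.
Qed.

Lemma DB (R : realType) (T U : finType) (G : {set T * U}) (dl : R) s k :
  0 < k -> Ext G dl s k -> forall (A : {set T}) (B : {set U}),
  (eE G A B)%:R * ((minn #|A| #|B|)%:R `^ k) <= dl * (s%:R `^ k) * #|A|%:R * #|B|%:R.
Proof.
move=> k0 hE A B.
case: (posnP #|A|) => [->|apos].
  by rewrite min0n powR0 ?gt_eqF // mulr0 mulr0 mul0r.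
case: (posnP #|B|) => [->|bpos].
  by rewrite minn0 powR0 ?gt_eqF // !mulr0.
have mpos : (0 < minn #|A| #|B|)%N by rewrite leq_min apos bpos.
case: (leqP #|A| #|B|) => ab.
  by apply: DB1.
rewrite -(eE_tr G) [_ * #|A|%:R * _]mulrAC.
exact: DB1 (Ext_tr hE) _ _ _ (ltnW ab).
Qed.

Lemma DBc (R : realType) (T U : finType) (G : {set T * U}) (dl : R) s k
  (A : {set T}) (B : {set U}) (c : R) :
  0 < k -> 0 <= dl -> Ext G dl s k -> (0 < minn #|A| #|B|)%N ->
  s%:R `^ k <= (minn #|A| #|B|)%:R `^ k * c ->
  (eE G A B)%:R <= dl * c * #|A|%:R * #|B|%:R.
Proof.
move=> k0 dl0 hE mpos hc.
have := DB k0 hE A B.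
set P := _ `^ k; set e := (eE G A B)%:R.
have P0 : 0 < P by apply: powR_gt0; rewrite ltr0n.
move=> h.
have : e * P <= (dl * c * #|A|%:R * #|B|%:R) * P.
  apply: (le_trans h).
  set S := s%:R `^ k; set a := #|A|%:R; set b := #|B|%:R.
  have E1 : dl * S * a * b = (dl * a * b) * S by ring.
  have E2 : dl * c * a * b * P = (dl * a * b) * (P * c) by ring.
  rewrite E1 E2; apply: ler_wpM2l => //.
  by rewrite !mulr_ge0.
by rewrite ler_pM2r.
Qed.

Lemma bern_ratio (R : realType) (k : R) (s v : nat) : 0 < k -> k < 1 ->
  (0 < v)%N -> (v <= s)%N ->
  s%:R `^ k <= v%:R `^ k * (1 + k * (s%:R - v%:R) / v%:R).
Proof.
move=> k0 k1 vpos vs.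
have v0 : 0 < v%:R :> R by rewrite ltr0n.
rewrite (powR_ratio k v0 (ler0n _ _)) ler_pM2l; last by apply: powR_gt0.
apply: le_trans (bernoulli_powR k0 k1 _) _.
  by rewrite ler_pdivlMr // mul1r ler_nat.
rewrite lerD2l -mulrA ler_pM2l // le_eqVlt; apply/orP; left; apply/eqP.
by field; rewrite gt_eqF.
Qed.

Lemma eps_ratio (R : realType) (k eps eta : R) (s v : nat) : 0 <= k -> 0 < eps ->
  eps^-1 `^ k <= 1 + eta -> (0 < v)%N -> eps * s%:R <= v%:R ->
  s%:R `^ k <= v%:R `^ k * (1 + eta).
Proof.
move=> k0 e0 heta vpos hv.
have v0 : 0 < v%:R :> R by rewrite ltr0n.
rewrite (powR_ratio k v0 (ler0n _ _)) ler_pM2l; last by apply: powR_gt0.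
apply: le_trans heta.
apply: ge0_ler_powR => //.
- by rewrite nnegrE divr_ge0.
- by rewrite nnegrE invr_ge0 ltW.
by rewrite ler_pdivrMr // mulrC -ler_pdivrMr ?invr_gt0 // invrK mulrC.
Qed.

Section Extremal.
Variables (R : realType) (T U : finType) (G : {set T * U}) (X : {set T}) (Y : {set U}).
Variables (s : nat) (dl k eps eta : R).
Hypotheses (hX : #|X| = s) (hY : #|Y| = s) (hs : (0 < s)%N)
  (hdl : (eE G X Y)%:R = dl * s%:R ^+ 2) (hE : Ext G dl s k)
  (k0 : 0 < k) (k1 : k < 1) (e0 : 0 < eps) (e1 : eps < 1)
  (heta : eps^-1 `^ k <= 1 + eta) (eta0 : 0 <= eta) (hc : 2 * k + eta <= eps ^+ 2).

Ltac fixh :=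
  have k0' : 0 < k := k0; have k1' : k < 1 := k1; have e0' : 0 < eps := e0;
  have e1' : eps < 1 := e1; have eta0' : 0 <= eta := eta0;
  have hc' : 2 * k + eta <= eps ^+ 2 := hc.

Lemma dl_ge0 : 0 <= dl.
Proof.
have s0 : 0 < s%:R ^+ 2 :> R by rewrite exprn_gt0 // ltr0n.
by rewrite -(pmulr_lge0 _ s0) -hdl.
Qed.

Lemma dl_le1 : dl <= 1.
Proof.
have s0 : 0 < s%:R ^+ 2 :> R by rewrite exprn_gt0 // ltr0n.
rewrite -(ler_pM2r s0) mul1r -hdl expr2 -natrM ler_nat.
by have := eE_le G X Y; rewrite hX hY.
Qed.

Lemma k_le_eps : k <= eps.
Proof.
fixh.
have : eps ^+ 2 <= eps by rewrite expr2 ger_pMl // ltW.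
move=> h; lra.
Qed.

Lemma mindeg_l x : x \in X -> (dl - eps) * s%:R <= (eE G (finset.set1 x) Y)%:R.
Proof.
move=> xX; rewrite leNgt; apply/negP => hlt; fixh.
have sp := eE_splitl G Y (_ : finset.set1 x \subset X).
rewrite finset.sub1set xX in sp; have {}sp := sp erefl.
have cX : #|X :\ x| = s.-1 by rewrite -hX (cardsD1 x X) xX.
have dl0 := dl_ge0; have dl1 := dl_le1; have ke := k_le_eps.
move: hdl hlt; rewrite sp natrD.
have [s' Es] : exists s', s = s'.+1 by exists s.-1; rewrite prednK.
have hY' : #|Y| = s'.+1 by rewrite hY Es.
rewrite Es /= in cX *.
case: (posnP s') => [s'0|s'pos].
  move: cX; rewrite s'0 => /eqP; rewrite cards_eq0 => /eqP ->.
  rewrite eE0l addr0 => ->; lra.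
have hsY : (s' <= #|Y|)%N by rewrite hY'.
have [Y0 [sY0 cY0 hav]] := avg_right G (X :\ x) hsY.
have hpos : (0 < #|X :\ x|)%N by rewrite cX.
have hx := hE (esym (etrans cY0 (esym cX))) hpos; rewrite cX /= in hx.
move: hav; rewrite -(ler_nat R) !natrM hY'.
set e2 := (eE G (X :\ x) Y0)%:R in hx *; set f1 := (eE G (X :\ x) Y)%:R.
set deg := (eE G _ Y)%:R.
set S' := s'%:R.
have S'1 : 1 <= S' by rewrite ler1n.
have SS : (s'.+1)%:R = S' + 1 :> R by rewrite -natr1.
rewrite SS => hav.
set P := S' `^ k in hx.
have P0 : 0 < P by apply: powR_gt0; lra.
have hb : (S' + 1) `^ k <= P * (1 + k / S').
  rewrite (powR_ratio k (_ : 0 < S') (_ : 0 <= S' + 1)); try lra.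
  rewrite ler_pM2l //.
  apply: le_trans (bernoulli_powR k0 k1 _) _.
    by rewrite ler_pdivlMr ?mul1r; lra.
  by rewrite mulrDl divff ?gt_eqF; lra.
have h2 : e2 <= dl * (S' ^+ 2 + k * S').
  have : e2 * P <= dl * (P * (1 + k / S')) * S' ^+ 2.
    apply: le_trans hx _; rewrite Es SS.
    by rewrite ler_wpM2r ?exprn_ge0 ?ler_wpM2l; lra.
  move=> H.
  have E : dl * (P * (1 + k / S')) * S' ^+ 2 = (dl * (S' ^+ 2 + k * S')) * P.
    by field; lra.
  by rewrite E ler_pM2r // in H.
move=> hd hlt.
have h3 : e2 * (S' + 1) > S' * (S' + 1) * (dl * S' + eps) by nra.
have h4 : e2 > S' * (dl * S' + eps).
  by move: h3; rewrite [_ * (S' + 1) * _]mulrAC ltr_pM2r; lra.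
have : S' * eps < S' * (dl * k) by nra.
rewrite ltr_pM2l; last lra.
nra.
Qed.


Lemma reg_upper (X' : {set T}) (Y' : {set U}) : X' \subset X -> Y' \subset Y ->
  eps * s%:R <= #|X'|%:R -> eps * s%:R <= #|Y'|%:R ->
  (eE G X' Y')%:R <= (dl + eps) * #|X'|%:R * #|Y'|%:R.
Proof.
move=> sX sY hp hq; fixh.
have dl0 := dl_ge0; have dl1 := dl_le1.
have s0 : 0 < s%:R :> R by rewrite ltr0n.
have hu : eps * s%:R <= (minn #|X'| #|Y'|)%:R.
  by case: (leqP #|X'| #|Y'|).
have upos : (0 < minn #|X'| #|Y'|)%N.
  rewrite -(ltr0n R); apply: lt_le_trans hu; exact: mulr_gt0.
have := DBc (c := 1 + eta) k0 dl0 hE upos (eps_ratio (ltW k0) e0 heta upos hu).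
move=> h; apply: (le_trans h).
rewrite ler_wpM2r // ler_wpM2r //.
have : eps ^+ 2 <= eps by rewrite expr2 ger_pMl // ltW.
have : dl * eta <= 1 * eta by apply: ler_wpM2r.
nra.
Qed.

Lemma reg_lower (X' : {set T}) (Y' : {set U}) : X' \subset X -> Y' \subset Y ->
  eps * s%:R <= #|X'|%:R -> eps * s%:R <= #|Y'|%:R ->
  (dl - eps) * #|X'|%:R * #|Y'|%:R <= (eE G X' Y')%:R.
Proof.
move=> sX sY hp hq; fixh.
have dl0 := dl_ge0; have dl1 := dl_le1.
have s0 : 0 < s%:R :> R by rewrite ltr0n.
have spr := eE_splitr G X sY.
have spl := eE_splitl G Y' sX.
have cY : #|Y :\: Y'| = (s - #|Y'|)%N by rewrite cardsD (finset.setIidPr sY) hY.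
have cX : #|X :\: X'| = (s - #|X'|)%N by rewrite cardsD (finset.setIidPr sX) hX.
have qs : (#|Y'| <= s)%N by rewrite -hY subset_leq_card.
have ps : (#|X'| <= s)%N by rewrite -hX subset_leq_card.
set p := #|X'|%:R in hp *; set q := #|Y'|%:R in hq *; set S := s%:R in s0 hp hq *.
have pS : p <= S by rewrite ler_nat.
have p00 : 0 <= p := ler0n _ _.
have q00 : 0 <= q := ler0n _ _.
have qS : q <= S by rewrite ler_nat.
have ke := k_le_eps.
have ep : eps ^+ 2 * S <= eps * p by rewrite expr2 -mulrA ler_wpM2l // ltW.
have B1 : (eE G X (Y :\: Y'))%:R <= dl * S * (S - q) + dl * k * S * q.
  case: (posnP (s - #|Y'|)%N) => [z|vpos].
    have := eE_le G X (Y :\: Y'); rewrite cY z muln0 leqn0 => /eqP ->.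
    have : (s <= #|Y'|)%N by rewrite -subn_eq0 z.
    rewrite -(ler_nat R) => qS'.
    have -> : S - q = 0 by lra.
    rewrite mulr0 add0r !mulr_ge0 //; lra.
  have mv : minn #|X| #|Y :\: Y'| = (s - #|Y'|)%N.
    by rewrite hX cY; apply/minn_idPr; rewrite leq_subr.
  have := @bern_ratio R k s (s - #|Y'|)%N k0 k1 vpos (leq_subr _ _).
  rewrite -mv => hb.
  have := DBc k0 dl0 hE (_ : (0 < minn #|X| #|Y :\: Y'|)%N) hb.
  rewrite mv => /(_ vpos); rewrite hX cY natrB //.
  move=> h; apply: (le_trans h).
  have v0 : 0 < S - q by rewrite -natrB // ltr0n.
  have -> : S - (S - q) = q by ring.
  have -> : dl * (1 + k * q / (S - q)) * S * (S - q) = dl * S * (S - q) + dl * k * S * q.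
    by field; lra.
  by [].
have B2 : (eE G (X :\: X') Y')%:R <= dl * (S - p) * q + (k + eta) * S * q.
  case: (posnP (s - #|X'|)%N) => [z|wpos].
    have := eE_le G (X :\: X') Y'; rewrite cX z mul0n leqn0 => /eqP ->.
    have : (s <= #|X'|)%N by rewrite -subn_eq0 z.
    rewrite -(ler_nat R) => pS'.
    have -> : S - p = 0 by lra.
    rewrite mulr0 mul0r add0r !mulr_ge0 //; lra.
  have q0 : (0 < #|Y'|)%N.
    rewrite -(ltr0n R); apply: lt_le_trans hq; exact: mulr_gt0.
  have upos : (0 < minn #|X :\: X'| #|Y'|)%N by rewrite leq_min cX wpos q0.
  have w0 : 0 < S - p by rewrite -natrB // ltr0n.
  case: (leqP #|Y'| (s - #|X'|)) => hqw.
    have mv : minn #|X :\: X'| #|Y'| = #|Y'| by rewrite cX; apply/minn_idPr.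
    have hu : eps * S <= (minn #|X :\: X'| #|Y'|)%:R by rewrite mv.
    have := DBc (c := 1 + eta) k0 dl0 hE upos (eps_ratio (ltW k0) e0 heta upos hu).
    rewrite cX natrB // => h; apply: (le_trans h).
    fold q.
    have ew : 0 <= eta * (S - p) by apply: mulr_ge0; lra.
    have h1 : dl * (eta * (S - p)) <= 1 * (eta * (S - p)) by apply: ler_wpM2r.
    have h2 : eta * (S - p) <= eta * S by apply: ler_wpM2l => //; lra.
    have h3 : dl * eta * (S - p) <= (k + eta) * S.
      have : 0 <= k * S by apply: mulr_ge0; lra.
      rewrite -mulrA; lra.
    have q0' : 0 <= q by [].
    have h4 := ler_wpM2r q0' h3.
    lra.
  have mv : minn #|X :\: X'| #|Y'| = (s - #|X'|)%N by rewrite cX; apply/minn_idPl/ltnW.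
  have := @bern_ratio R k s (s - #|X'|)%N k0 k1 wpos (leq_subr _ _).
  rewrite -mv => hb.
  have := DBc k0 dl0 hE upos hb.
  rewrite mv cX natrB // => h; apply: (le_trans h).
  fold q.
  have -> : S - (S - p) = p by ring.
  have -> : dl * (1 + k * p / (S - p)) * (S - p) * q = dl * (S - p) * q + dl * k * p * q.
    by field; lra.
  have : dl * k * p * q <= k * S * q.
    have h1 : dl * p <= S.
      have : dl * p <= 1 * p by apply: ler_wpM2r.
      lra.
    have kq : 0 <= k * q by apply: mulr_ge0; lra.
    have := ler_wpM2r kq h1.
    lra.
  have : 0 <= eta * S * q by rewrite !mulr_ge0 //; lra.
  lra.
move: hdl; rewrite spr spl !natrD => hd.
have : dl * p * q - (2 * k + eta) * S * q <= (eE G X' Y')%:R.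
  have : dl * S * (S - q) + dl * k * S * q + (dl * (S - p) * q + (k + eta) * S * q) + (eE G X' Y')%:R >= dl * S ^+ 2.
    rewrite -hd; lra.
  have : dl * k * S * q <= k * S * q.
    have kSq : 0 <= k * S * q by rewrite !mulr_ge0 //; lra.
    have : dl * (k * S * q) <= 1 * (k * S * q) by apply: ler_wpM2r.
    lra.
  move=> h1 h2; nra.
move=> h.
have : (2 * k + eta) * S * q <= eps * p * q.
  have q0 : 0 <= q by [].
  have : (2 * k + eta) * S <= eps * p by nra.
  nra.
nra.
Qed.

End Extremal.

Lemma extract (R : realType) (d eps k eta : R) (N : nat) (G : {set 'I_N * 'I_N}) :
  0 < d -> 0 < k -> k < 1 -> 0 < eps -> eps < 1 -> eps^-1 `^ k <= 1 + eta ->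
  0 <= eta -> 2 * k + eta <= eps ^+ 2 -> (0 < N)%N ->
  d * N%:R ^+ 2 <= (eE G finset.setT finset.setT)%:R ->
  exists X Y : {set 'I_N}, [/\ #|X| = #|Y|, d `^ (k^-1) * N%:R <= #|X|%:R,
     super_regular G X Y eps (d - eps) & d <= bdens R G X Y].
Proof.
move=> d0 k0 k1 e0 e1 heta eta0 hc Npos hG.
pose P := fun p : {set 'I_N} * {set 'I_N} => (#|p.1| == #|p.2|) && (0 < #|p.1|)%N.
pose pot := fun p : {set 'I_N} * {set 'I_N} =>
  (eE G p.1 p.2)%:R * #|p.1|%:R `^ k / #|p.1|%:R ^+ 2 : R.
pose p0 := (finset.setT : {set 'I_N}, finset.setT : {set 'I_N}).
have cT : #|(finset.setT : {set 'I_N})| = N by rewrite cardsT card_ord.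
have Pp0 : P p0 by rewrite /P /= cT eqxx Npos.
case: (arg_maxP pot Pp0) => p Pp pmax.
set X := p.1; set Y := p.2.
have [/eqP cXY spos] : #|X| == #|Y| /\ (0 < #|X|)%N by apply/andP.
set s := #|X|.
have S0 : 0 < s%:R :> R by rewrite ltr0n.
pose dl := (eE G X Y)%:R / s%:R ^+ 2 : R.
have hdl : (eE G X Y)%:R = dl * s%:R ^+ 2 by rewrite /dl divfK // gt_eqF // exprn_gt0.
have potp : pot p = dl * s%:R `^ k by rewrite /pot /dl -/X -/Y -/s; field; rewrite gt_eqF.
have hE : Ext G dl s k.
  move=> A B cAB apos.
  have := pmax (A, B); rewrite /P /= cAB eqxx -cAB apos => /(_ erefl).
  rewrite -potp /pot /= => h.
  have a2 : 0 < #|A|%:R ^+ 2 :> R by rewrite exprn_gt0 // ltr0n.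
  by rewrite -(ler_pM2r a2) divfK ?gt_eqF // in h.
have dl0 : 0 <= dl by rewrite /dl divr_ge0 // exprn_ge0.
have dl1 : dl <= 1.
  rewrite /dl ler_pdivrMr ?exprn_gt0 // mul1r expr2 -natrM ler_nat.
  by have := eE_le G X Y; rewrite -cXY.
have sN : (s <= N)%N by rewrite -cT subset_leq_card // subsetT.
have N0 : 0 < N%:R :> R by rewrite ltr0n.
have hpot0 : d * N%:R `^ k <= dl * s%:R `^ k.
  rewrite -potp; apply: le_trans (pmax p0 Pp0).
  rewrite /pot /= cT.
  have N2 : 0 < N%:R ^+ 2 :> R by rewrite exprn_gt0.
  rewrite ler_pdivlMr // mulrAC ler_pM2r //; last by apply: powR_gt0.
move: hpot0 => hpot0.
have Nks : s%:R `^ k <= N%:R `^ k.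
  by apply: ge0_ler_powR; rewrite ?nnegrE ?ler_nat // ltW.
have sk0 : 0 < s%:R `^ k by apply: powR_gt0.
have dld : d <= dl.
  have : d * s%:R `^ k <= dl * s%:R `^ k.
    apply: le_trans hpot0; apply: ler_wpM2l => //; exact: ltW.
  by rewrite ler_pM2r.
have hsize : d `^ (k^-1) * N%:R <= s%:R.
  have h1 : d * N%:R `^ k <= s%:R `^ k.
    apply: (le_trans hpot0); rewrite ler_piMl //; exact: ltW.
  have kinv : 0 < k^-1 by rewrite invr_gt0.
  have nn1 : d * N%:R `^ k \in Num.nneg.
    by rewrite nnegrE; apply: mulr_ge0; [exact: ltW| exact: powR_ge0].
  have nn2 : s%:R `^ k \in Num.nneg by rewrite nnegrE powR_ge0.
  have h2 := ge0_ler_powR (ltW kinv) nn1 nn2 h1.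
  rewrite powRM ?(ltW d0) ?powR_ge0 // -!powRrM mulfV ?gt_eqF // !powRr1 // in h2.
have hY : #|Y| = s by rewrite -cXY.
have hdlT : (eE (trG G) Y X)%:R = dl * s%:R ^+ 2 by rewrite eE_tr.
have hET := Ext_tr hE.
exists X, Y; split => //.
- split.
  + move=> X' Y' sX sY hp hq.
    rewrite -/s in hp; rewrite hY in hq.
    have hu := reg_upper (erefl s) hY spos hdl hE k0 k1 e0 e1 heta eta0 hc sX sY hp hq.
    have hl := reg_lower (erefl s) hY spos hdl hE k0 k1 e0 e1 heta eta0 hc sX sY hp hq.
    have p0' : 0 < #|X'|%:R :> R by apply: lt_le_trans hp; apply: mulr_gt0.
    have q0' : 0 < #|Y'|%:R :> R by apply: lt_le_trans hq; apply: mulr_gt0.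
    have pq : 0 < #|X'|%:R * #|Y'|%:R :> R by apply: mulr_gt0.
    have -> : bdens R G X Y = dl by rewrite /bdens -/(eE G X Y) hY natrM -expr2 /dl.
    rewrite /bdens -/(eE G X' Y') natrM ler_norml.
    have hx1 : (eE G X' Y')%:R / (#|X'|%:R * #|Y'|%:R) <= dl + eps.
      by rewrite ler_pdivrMr // mulrA.
    have hx2 : dl - eps <= (eE G X' Y')%:R / (#|X'|%:R * #|Y'|%:R).
      by rewrite ler_pdivlMr // mulrA.
    apply/andP; split; lra.
  + move=> x xX; rewrite -eE_deg hY.
    apply: le_trans (mindeg_l (erefl s) hY spos hdl hE k0 k1 e0 e1 eta0 hc xX).
    by apply: ler_wpM2r => //; rewrite lerD2r.
  + move=> y yY.
    have := mindeg_l hY (erefl s) spos hdlT hET k0 k1 e0 e1 eta0 hc yY.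
    rewrite eE_deg -/s.
    have -> : [set y0 in X | (y, y0) \in trG G] = [set x in X | (x, y) \in G].
      by apply/setP => z; rewrite !inE.
    apply: le_trans; apply: ler_wpM2r => //; by rewrite lerD2r.
- by rewrite /bdens -/(eE G X Y) hY natrM -expr2 -/dl.
Qed.

Lemma restrictI (T U : finType) (G : {set T * U}) (X X' : {set T}) (Y Y' : {set U}) :
  X' \subset X -> Y' \subset Y ->
  (G :&: finset.setX X Y) :&: finset.setX X' Y' = G :&: finset.setX X' Y'.
Proof.
move=> sX sY; apply/setP => -[a b]; rewrite !inE /=.
have hX := fintype.subsetP sX a; have hY := fintype.subsetP sY b.
apply/idP/idP.
  by case/andP => /and3P [-> _ _] /andP [-> ->].
by case/and3P => h ha hb; rewrite h ha hb hX // hY.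
Qed.

Lemma bdens_restrict (R : realType) (T U : finType) (G : {set T * U}) (X X' : {set T}) (Y Y' : {set U}) :
  X' \subset X -> Y' \subset Y ->
  bdens R (G :&: finset.setX X Y) X' Y' = bdens R G X' Y'.
Proof. by move=> sX sY; rewrite /bdens restrictI. Qed.

Lemma sr_restrict (R : realType) (T U : finType) (G : {set T * U}) (X : {set T}) (Y : {set U}) (eps dt : R) :
  super_regular G X Y eps dt -> super_regular (G :&: finset.setX X Y) X Y eps dt.
Proof.
case=> hr h1 h2; split.
- move=> X' Y' sX sY hp hq.
  rewrite !bdens_restrict //; exact: hr.
- move=> x xX; apply: le_trans (h1 x xX) _; rewrite le_eqVlt; apply/orP; left; apply/eqP.
  congr (_%:R); apply: eq_card => y; rewrite !inE /= xX /=.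
  by case: (y \in Y); rewrite ?andbT.
- move=> y yY; apply: le_trans (h2 y yY) _; rewrite le_eqVlt; apply/orP; left; apply/eqP.
  congr (_%:R); apply: eq_card => x; rewrite !inE /= yY /=.
  by case: (x \in X); rewrite ?andbT.
Qed.

Lemma setXTT_I (N : nat) (G : {set 'I_N * 'I_N}) :
  G :&: finset.setX finset.setT finset.setT = G.
Proof. by apply/setP => -[a b]; rewrite !inE !andbT. Qed.

Lemma decomp (R : realType) (d eps k eta : R) (N : nat) :
  0 < d -> 0 < k -> k < 1 -> 0 < eps -> eps < 1 -> eps^-1 `^ k <= 1 + eta ->
  0 <= eta -> 2 * k + eta <= eps ^+ 2 -> (0 < N)%N ->
  forall n (G : {set 'I_N * 'I_N}), (#|G| <= n)%N ->
  exists (K : nat) (X Y : nat -> {set 'I_N}) (F : nat -> {set 'I_N * 'I_N}),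
  [/\ G = \bigcup_(i < K.+1) F i /\
      (forall i j, (i <= K)%N -> (j <= K)%N -> i != j -> [disjoint F i & F j]),
    (forall i, (i <= K)%N -> #|X i| = #|Y i| /\ F i \subset G :&: finset.setX (X i) (Y i)),
    (forall i, (1 <= i <= K)%N ->
       [/\ super_regular (F i) (X i) (Y i) eps (d - eps), d <= bdens R (F i) (X i) (Y i)
         & d `^ (k^-1) * N%:R <= #|X i|%:R]),
    bdens R (F 0%N) (X 0%N) (Y 0%N) < d &
    K%:R * (d * (d `^ (k^-1) * N%:R) ^+ 2) <= #|G|%:R].
Proof.
move=> d0 k0 k1 e0 e1 heta eta0 hc Npos n.
have base : forall G : {set 'I_N * 'I_N},
    bdens R G finset.setT finset.setT < d ->
  exists (K : nat) (X Y : nat -> {set 'I_N}) (F : nat -> {set 'I_N * 'I_N}),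
  [/\ G = \bigcup_(i < K.+1) F i /\
      (forall i j, (i <= K)%N -> (j <= K)%N -> i != j -> [disjoint F i & F j]),
    (forall i, (i <= K)%N -> #|X i| = #|Y i| /\ F i \subset G :&: finset.setX (X i) (Y i)),
    (forall i, (1 <= i <= K)%N ->
       [/\ super_regular (F i) (X i) (Y i) eps (d - eps), d <= bdens R (F i) (X i) (Y i)
         & d `^ (k^-1) * N%:R <= #|X i|%:R]),
    bdens R (F 0%N) (X 0%N) (Y 0%N) < d &
    K%:R * (d * (d `^ (k^-1) * N%:R) ^+ 2) <= #|G|%:R].
  move=> G hlt.
  exists 0%N, (fun _ => finset.setT), (fun _ => finset.setT), (fun _ => G); split => //.
  - split; first by rewrite big_ord1.
    by move=> i j; rewrite !leqn0 => /eqP -> /eqP ->; rewrite eqxx.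
  - by move=> i _; split => //; rewrite setXTT_I.
  - by move=> i /andP [h1 h2]; move: (leq_trans h1 h2).
  - by rewrite mul0r ler0n.
elim: n => [|n IH] G hG.
  apply: base.
  move: hG; rewrite leqn0 cards_eq0 => /eqP ->.
  by rewrite /bdens finset.set0I cards0 mul0r.
case: (boolP (bdens R G finset.setT finset.setT < d)) => hlt; first exact: base.
have hge : d <= bdens R G finset.setT finset.setT by rewrite leNgt.
have NN : 0 < (N * N)%:R :> R by rewrite ltr0n muln_gt0 Npos.
have hG0 : d * N%:R ^+ 2 <= (eE G finset.setT finset.setT)%:R.
  move: hge; rewrite /bdens cardsT card_ord ler_pdivlMr //.
  by rewrite natrM -expr2.
have [X [Y [cXY hsz hsr hdd]]] := extract d0 k0 k1 e0 e1 heta eta0 hc Npos hG0.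
set F1 := G :&: finset.setX X Y.
set G2 := G :\: F1.
have sF1 : F1 \subset G by apply: finset.subsetIl.
have cF1 : #|F1| = eE G X Y by [].
have sX0 : 0 <= d `^ k^-1 * N%:R by apply: mulr_ge0; [exact: powR_ge0|exact: ler0n].
have hF1 : d * (d `^ k^-1 * N%:R) ^+ 2 <= #|F1|%:R.
  have ss0 : 0 < (#|X| * #|Y|)%:R :> R.
    rewrite ltr0n muln_gt0 -cXY andbb -(ltr0n R); apply: lt_le_trans hsz.
    by apply: mulr_gt0; [exact: powR_gt0| rewrite ltr0n].
  move: hdd; rewrite /bdens -/F1 ler_pdivlMr // => h; apply: le_trans h.
  rewrite ler_wpM2l ?(ltW d0) // natrM -cXY -expr2.
  by rewrite lerXn2r // ?nnegrE ?ler0n.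
have F1pos : (0 < #|F1|)%N.
  rewrite -(ltr0n R); apply: lt_le_trans hF1; apply: mulr_gt0 => //.
  by rewrite exprn_gt0 // mulr_gt0 // ?powR_gt0 // ltr0n.
have cG : #|G| = (#|G2| + #|F1|)%N.
  by rewrite /G2 cardsD (finset.setIidPr sF1) subnK // subset_leq_card.
have hG2 : (#|G2| <= n)%N.
  have h1 : (#|G2| < #|G|)%N by rewrite cG -addn1 leq_add2l.
  by rewrite -ltnS (leq_trans h1 hG).
have [K' [X' [Y' [F' [[hU hD] hS hR h0 hK]]]]] := IH G2 hG2.
pose X2 := fun i => if i == K'.+1 then X else X' i.
pose Y2 := fun i => if i == K'.+1 then Y else Y' i.
pose F2 := fun i => if i == K'.+1 then F1 else F' i.
have sG2 : G2 \subset G by apply: finset.subsetDl.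
have F'sub : forall i, (i <= K')%N -> F' i \subset G2.
  move=> i hi; have [_ h] := hS i hi.
  by apply: (fintype.subset_trans h); apply: finset.subsetIl.
exists K'.+1, X2, Y2, F2; split.
- split.
  + rewrite big_ord_recr /= (eq_bigr (fun i : 'I_K'.+1 => F' i)); last first.
      move=> i _; rewrite /F2 /=.
      by rewrite (_ : (i == K'.+1 :> nat) = false) //; apply/negbTE; rewrite neq_ltn ltn_ord.
    rewrite /F2 eqxx.
    rewrite -hU; apply/setP => -[a b]; rewrite !inE /=.
    by case: ((a, b) \in G); case: (a \in X); case: (b \in Y).
  + move=> i j hi hj hij; rewrite /F2.
    have disj : forall l, (l <= K')%N -> [disjoint F1 & F' l].
      move=> l hl; rewrite finset.disjoints_subset; apply/fintype.subsetP => z zF1.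
      rewrite inE; apply/negP => zF'.
      have := fintype.subsetP (F'sub l hl) z zF'.
      by rewrite inE zF1.
    case: (eqVneq i K'.+1) => [ei|ni]; case: (eqVneq j K'.+1) => [ej|nj].
    * by move: hij; rewrite ei ej eqxx.
    * by apply: disj; rewrite -ltnS ltn_neqAle nj.
    * by rewrite disjoint_sym; apply: disj; rewrite -ltnS ltn_neqAle ni.
    * have hi' : (i <= K')%N by rewrite -ltnS ltn_neqAle ni.
      have hj' : (j <= K')%N by rewrite -ltnS ltn_neqAle nj.
      exact: hD.
- move=> i hi; rewrite /X2 /Y2 /F2.
  case: (eqVneq i K'.+1) => [ei|ni].
    by split => //; apply: fintype.subxx.
  have hi' : (i <= K')%N by rewrite -ltnS ltn_neqAle ni.
  have [h1 h2] := hS i hi'.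
  split => //; apply: (fintype.subset_trans h2).
  by apply: finset.setSI.
- move=> i /andP [hi1 hi2]; rewrite /X2 /Y2 /F2.
  case: (eqVneq i K'.+1) => [ei|ni].
    split => //.
      exact: sr_restrict.
    by rewrite bdens_restrict.
  by apply: hR; apply/andP; split => //; rewrite -ltnS ltn_neqAle ni.
- by rewrite /X2 /Y2 /F2.
rewrite cG natrD -nat1r mulrDl mul1r addrC.
by apply: lerD.
Qed.

Lemma consts (R : realType) (eps : R) : 0 < eps -> eps < 1 / 12 ->
  let k := (10 / eps ^+ 2 * ln (1 / eps))^-1 in
  [/\ 0 < k, k < 1, 0 <= eps^-1 `^ k - 1 & 2 * k + (eps^-1 `^ k - 1) <= eps ^+ 2].
Proof.
move=> e0 e12 k.
have e1 : eps < 1 by apply: (lt_trans e12); lra.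
set L := ln (1 / eps).
have hL : 1 - eps <= L.
  rewrite /L div1r lnV ?posrE //.
  have := expR_ge1Dx (ln eps); rewrite lnK ?posrE // => h; lra.
have L0 : 0 < L by lra.
have Q0 : 0 < eps ^+ 2 by rewrite exprn_gt0.
have Q1 : eps ^+ 2 < 1 / 144.
  have : eps ^+ 2 < (1/12) ^+ 2 by rewrite ltrXn2r // ?nnegrE; lra.
  have -> : (1 / 12 : R) ^+ 2 = 1 / 144 by rewrite expr2; field.
  done.
have h10 : 0 < 10 :> R by lra.
have hk : k * (10 * L) = eps ^+ 2.
  have h10L : 10 * L != 0 by rewrite gt_eqF // mulr_gt0.
  by rewrite /k -/L mulrAC invf_div divfK.
have k0 : 0 < k by rewrite /k invr_gt0 mulr_gt0 // divr_gt0.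
have kb : k * (10 * (11 / 12)) <= eps ^+ 2.
  have h1 : 10 * (11/12) <= 10 * L :> R by lra.
  rewrite -hk; apply: ler_wpM2l => //; exact: ltW.
have y : eps^-1 `^ k = expR (eps ^+ 2 / 10).
  rewrite /powR ifF; last by apply/negbTE; rewrite invr_eq0 gt_eqF.
  congr expR; rewrite -div1r -/L.
  have -> : eps ^+ 2 / 10 = k * (10 * L) / 10 by rewrite hk.
  by field.
rewrite y.
set z := eps ^+ 2 / 10.
have z0 : 0 < z by rewrite /z; lra.
have ez1 := expR_ge1Dx z.
have ez2 := expR_ge1Dx (- z).
have ez3 : expR z * expR (- z) = 1 by rewrite expRN mulfV // gt_eqF // expR_gt0.
have ez4 : expR z * (1 - z) <= 1.
  rewrite -ez3; apply: ler_wpM2l; [exact: ltW (expR_gt0 _)| lra].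
set w := expR z in ez1 ez4 *.
have w0 : 0 < w by apply: expR_gt0.
have zh : z <= 1 / 2 by rewrite /z; lra.
have w2 : w <= 2.
  have : w * (1 / 2) <= w * (1 - z) by apply: ler_wpM2l; [exact: ltW| lra].
  lra.
have wz : w * z <= 2 * z by apply: ler_wpM2r; [exact: ltW|].
have h3 : w - 1 <= 2 * z.
  have : w - w * z <= 1 by rewrite mulrBr mulr1 in ez4.
  lra.
split.
- exact: k0.
- lra.
- lra.
- rewrite /z in h3; lra.
Qed.

Unset Implicit Arguments.

(* G: balanced bipartite graph with parts 'I_N (left) and 'I_N (right),
   n = 2N vertices, edge set E.  H_i = (X i, Y i; F i), 0 <= i <= K. *)
Theorem theorem2p5 (R : realType) (d eps : R) (N : nat)
    (E : {set 'I_N * 'I_N}) :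
  0 < d -> d <= 1 -> 0 < eps -> eps < 1 / 12 ->
  expR (10 * ln (1 / d) * ln (1 / eps) / eps ^+ 2) < (2 * N)%:R ->
  exists (K : nat) (X Y : nat -> {set 'I_N}) (F : nat -> {set 'I_N * 'I_N}),
    [/\ E = \bigcup_(i < K.+1) F i /\
          (forall i j, (i <= K)%N -> (j <= K)%N -> i != j -> [disjoint F i & F j]),
        (forall i, (i <= K)%N ->
           #|X i| = #|Y i| /\ F i \subset E :&: finset.setX (X i) (Y i)),
        (forall i, (1 <= i <= K)%N ->
           super_regular (F i) (X i) (Y i) eps (d - eps) /\
           d <= bdens R (F i) (X i) (Y i)),
        ((exists m : nat,
           (d `^ (10 / eps ^+ 2 * ln (1 / eps))) * (2 * N)%:R / 2 <= m%:R /\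
           (forall i, (1 <= i <= K)%N -> (m <= #|X i|)%N /\ (m <= #|Y i|)%N)) /\
         bdens R (F 0%N) (X 0%N) (Y 0%N) < d ) &
        K%:R <= 2 * bdens R E (finset.setT : {set 'I_N}) (finset.setT : {set 'I_N})
                  * (d `^ (- (20 / eps ^+ 2 * ln (1 / eps)))) / d].
Proof.
move=> d0 d1 e0 e12 hN.
have e1 : eps < 1 by apply: (lt_trans e12); lra.
have Npos : (0 < N)%N.
  have : 0 < (2 * N)%:R :> R by apply: lt_trans hN; apply: expR_gt0.
  by rewrite ltr0n muln_gt0.
have [k0 k1 eta0 hc] := consts e0 e12.
set k := (10 / eps ^+ 2 * ln (1 / eps))^-1 in k0 k1 eta0 hc.
have heta : eps^-1 `^ k <= 1 + (eps^-1 `^ k - 1) by rewrite addrC subrK.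
have [K [X [Y [F [[hU hD] hS hR h0 hK]]]]] :=
  decomp d0 k0 k1 e0 e1 heta eta0 hc Npos (leqnn #|E|).
have ka : k^-1 = 10 / eps ^+ 2 * ln (1 / eps) by rewrite /k invrK.
rewrite ka in hR hK.
set a := 10 / eps ^+ 2 * ln (1 / eps) in ka hR hK *.
set D := d `^ a.
have D0 : 0 < D by apply: powR_gt0.
have D1 : D <= 1.
  have h1 : (1 : R) `^ a = 1 by rewrite powR1.
  have a0 : 0 <= a.
    rewrite /a; apply: mulr_ge0; first by rewrite divr_ge0 // exprn_ge0 // ltW.
    rewrite div1r lnV ?posrE // oppr_ge0; apply: ln_le0; exact: ltW.
  rewrite /D -h1; apply: ge0_ler_powR => //; rewrite nnegrE; [exact: ltW|exact: ler01].
have N2 : (2 * N)%:R / 2 = N%:R :> R by rewrite natrM; field.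
exists K, X, Y, F; split => //.
- by move=> i hi; have [h1 h2 h3] := hR i hi.
- split => //.
  rewrite -mulrA N2.
  pose P := fun m : nat => D * N%:R <= m%:R.
  have exP : exists m, P m by exists N; rewrite /P ler_piMl.
  case: (ex_minnP exP) => m hm hmin.
  exists m; split => // i hi.
  have [_ _ h3] := hR i hi.
  have hiK : (i <= K)%N by case/andP: hi.
  have [hxy _] := hS i hiK.
  have h := hmin _ h3.
  by rewrite -hxy.
- have NN : 0 < (N * N)%:R :> R by rewrite ltr0n muln_gt0 Npos.
  rewrite /bdens setXTT_I.
  have e20 : - (20 / eps ^+ 2 * ln (1 / eps)) = - (a + a) by rewrite /a; ring.
  rewrite e20 powRN powRD; last by apply/implyP => _; rewrite gt_eqF.
  rewrite -/D.
  have hK' : K%:R * (d * (D * D) * (N * N)%:R) <= #|E|%:R.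
    have E1 : d * (d `^ a * N%:R) ^+ 2 = d * (D * D) * (N * N)%:R by rewrite /D natrM; ring.
    by rewrite -E1.
  have c0 : 0 < d * (D * D) * (N * N)%:R by rewrite !mulr_gt0.
  have : K%:R <= #|E|%:R / (d * (D * D) * (N * N)%:R) by rewrite ler_pdivlMr.
  move=> h; apply: le_trans h _.
  rewrite cardsT card_ord.
  have NN0 : (N * N)%:R != 0 :> R by rewrite gt_eqF.
  have DD0 : D * D != 0 by rewrite gt_eqF // mulr_gt0.
  have d00 : d != 0 by rewrite gt_eqF.
  have -> : 2 * (#|E|%:R / (N * N)%:R) / (D * D) / d
          = 2 * (#|E|%:R / (d * (D * D) * (N * N)%:R)).
    by field; rewrite d00 andbT !gt_eqF // ltr0n.
  have : 0 <= #|E|%:R / (d * (D * D) * (N * N)%:R) by apply: divr_ge0; [exact: ler0n| exact: ltW].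
  lra.
Qed.
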